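(* Let $\alpha\in\ell^2$, $\epsilon>0$ and $N\ge1$ an integer, and suppose that the $(\epsilon,L)$-sequence associated with $\alpha$ and $\epsilon$ has length at least $N$, i.e. $c_N<\infty$. Then $a_N(R_\alpha)\ge\epsilon/\sqrt2$.
   Context: $\mathbb{N}=\{0,1,2,\dots\}$; $\ell^2$ is the space of square-summable functions $\mathbb{N}\to\mathbb{C}$; $(R_\alpha f)(k)=\alpha_k\sum_{j=0}^kf(j)$. Approximation numbers: $a_{n+1}(T)=\inf\{\|T-P\|:P$ linear on $\ell^2$ with rank $\le n\}$. For a finite natural interval $I$: $\mu(I)=\sum_{k\in I}|\alpha_k|^2$, $\|f\|_{2,I}=(\sum_{k\in I}|f(k)|^2)^{1/2}$, $l(I,f)=\sum_{k\in I}\sum_{n\in I\setminus\{k\}}|\alpha_k\alpha_n\sum_{j=\min(k,n)+1}^{\max(k,n)}f(j)|^2$, $L(I)=(\sup_{\|f\|_{2,I}\le1}l(I,f)/\mu(I))^{1/2}$ (sup over $f$ supported in $I$; $L(I)=0$ if $\alpha$ vanishes on $I$). $(\epsilon,L)$-sequence: $c_0=0$, $c_{k+1}=\inf\{t\in\mathbb{N}:t>c_k,\ L([c_k,t-1])>\epsilon\}$ ($\inf\emptyset=+\infty$). *)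

(* Defs.v *)
From Stdlib Require Import Reals.
From Coquelicot Require Import Coquelicot.
Open Scope R_scope.

Fixpoint csum (n : nat) (F : nat -> C) : C :=
  match n with O => 0%C | S m => Cplus (csum m F) (F m) end.

Definition Rbar_sqrt (x : Rbar) : Rbar :=
  match x with Finite r => Finite (sqrt r) | p_infty => p_infty | m_infty => Finite 0 end.

Definition l2 (f : nat -> C) : Prop := ex_series (fun k => (Cmod (f k)) ^ 2).

Definition l2norm (f : nat -> C) : Rbar :=
  Rbar_sqrt (Sup_seq (fun n => Finite (sum_n (fun k => (Cmod (f k)) ^ 2) n))).

Definition Ralpha (alpha : nat -> C) (f : nat -> C) : nat -> C :=
  fun k => Cmult (alpha k) (sum_n f k).

Definition opnorm (A : (nat -> C) -> (nat -> C)) : Rbar :=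
  Rbar_lub (fun x => exists f, l2 f /\ Rbar_le (l2norm f) (Finite 1) /\ x = l2norm (A f)).

Definition lin_l2 (P : (nat -> C) -> (nat -> C)) : Prop :=
  (forall f, l2 f -> l2 (P f)) /\
  (forall f g (a : C), l2 f -> l2 g ->
     P (fun k => Cplus (f k) (Cmult a (g k))) = (fun k => Cplus (P f k) (Cmult a (P g k)))).

Definition rank_le (P : (nat -> C) -> (nat -> C)) (n : nat) : Prop :=
  exists v : nat -> (nat -> C), (forall i, (i < n)%nat -> l2 (v i)) /\
    forall f, l2 f -> exists c : nat -> C,
      P f = (fun k => csum n (fun i => Cmult (c i) (v i k))).

(* a_{n+1}(T) = inf { ||T - P|| : P linear on l^2, rank P <= n };
   approx_num T N = a_N(T)  (meaningful for N >= 1) *)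
Definition approx_num (T : (nat -> C) -> (nat -> C)) (N : nat) : Rbar :=
  Rbar_glb (fun x => exists P, lin_l2 P /\ rank_le P (N - 1) /\
                       x = opnorm (fun f k => Cminus (T f k) (P f k))).

Definition muI (alpha : nat -> C) (a b : nat) : R :=
  sum_n_m (fun k => (Cmod (alpha k)) ^ 2) a b.

Definition normI (f : nat -> C) (a b : nat) : R :=
  sqrt (sum_n_m (fun k => (Cmod (f k)) ^ 2) a b).

Definition lI (alpha : nat -> C) (a b : nat) (f : nat -> C) : R :=
  sum_n_m (fun k => sum_n_m (fun n =>
     if Nat.eqb n k then 0
     else (Cmod (Cmult (Cmult (alpha k) (alpha n))
                 (sum_n_m f (S (Nat.min k n)) (Nat.max k n)))) ^ 2) a b) a b.

Definition LI (alpha : nat -> C) (a b : nat) : Rbar :=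
  if Req_EM_T (muI alpha a b) 0 then Finite 0
  else Rbar_sqrt (Lub_Rbar (fun x => exists f : nat -> C,
          (forall k, (k < a \/ b < k)%nat -> f k = 0%C) /\
          normI f a b <= 1 /\ x = lI alpha a b f / muI alpha a b)).

(* m is the infimum in nat of {t | P t}, with None standing for +oo (inf of empty set) *)
Definition is_nat_inf (P : nat -> Prop) (m : option nat) : Prop :=
  match m with
  | Some t => P t /\ forall s, P s -> (t <= s)%nat
  | None => forall s, ~ P s
  end.

Definition eps_L_seq (alpha : nat -> C) (eps : R) (c : nat -> option nat) : Prop :=
  c O = Some O /\
  forall k, match c k with
            | None => c (S k) = None
            | Some ck => is_nat_inf (fun t => (ck < t)%nat /\
                              Rbar_lt (Finite eps) (LI alpha ck (t - 1))) (c (S k))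
            end.

(* Main.v *)
Require Import Defs.
From Stdlib Require Import Reals Lia Lra Classical IndefiniteDescription FunctionalExtensionality.
From Coquelicot Require Import Coquelicot.
Open Scope R_scope.

Ltac toR := match goal with |- ?x = ?y => change (@eq R x y) end.
Lemma csum_ext n (F G : nat -> C) : (forall k, (k < n)%nat -> F k = G k) -> csum n F = csum n G.
Proof. induction n; simpl; intros H; auto. rewrite IHn by (intros; apply H; lia). rewrite H by lia. auto. Qed.

Lemma csum_zero n (F : nat -> C) : (forall k, (k < n)%nat -> F k = 0%C) -> csum n F = 0%C.
Proof. induction n; simpl; intros H; auto. rewrite IHn by (intros; apply H; lia). rewrite H by lia. ring. Qed.

Lemma csum_plus n (F G : nat -> C) : csum n (fun k => (F k + G k)%C) = (csum n F + csum n G)%C.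
Proof. induction n; simpl. ring. rewrite IHn. ring. Qed.

Lemma csum_scal n (a : C) (F : nat -> C) : csum n (fun k => (a * F k)%C) = (a * csum n F)%C.
Proof. induction n; simpl. ring. rewrite IHn. ring. Qed.

Lemma csum_swap n m (F : nat -> nat -> C) :
  csum n (fun k => csum m (fun i => F k i)) = csum m (fun i => csum n (fun k => F k i)).
Proof. induction n; simpl. symmetry; apply csum_zero; auto. rewrite IHn, <- csum_plus. auto. Qed.

Lemma csum_single n (F : nat -> C) m : (m < n)%nat -> (forall k, (k < n)%nat -> k <> m -> F k = 0%C) -> csum n F = F m.
Proof. induction n; simpl; intros Hm H. lia.
  destruct (Nat.eq_dec m n) as [->|Hne].
  - rewrite csum_zero. ring. intros; apply H; lia.
  - rewrite IHn by (try lia; intros; apply H; lia). rewrite (H n) by lia. ring.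
Qed.

Lemma homog_solve m : forall n, (m < n)%nat -> forall a : nat -> nat -> C,
  exists b : nat -> C, (exists k, (k < n)%nat /\ b k <> 0%C) /\
    forall i, (i < m)%nat -> csum n (fun k => (a i k * b k)%C) = 0%C.
Proof.
  induction m; intros n Hn a.
  - exists (fun _ => 1%C). split. exists 0%nat. split. lia. 
    intro H. injection H. lra. intros; lia.
  - destruct n as [|n']. lia.
    destruct (Classical_Prop.classic (exists i0, (i0 < S m)%nat /\ a i0 n' <> 0%C)) as [[i0 [Hi0 Hp]]|Hno].
    + set (p := a i0 n').
      set (r := fun i => if Nat.eq_dec i i0 then m else i).
      set (bb := fun i k => (p * a (r i) k - a (r i) n' * a i0 k)%C).
      destruct (IHm n' ltac:(lia) bb) as [g [[k0 [Hk0 Hg]] Heq]].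
      set (s0 := csum n' (fun k => (a i0 k * g k)%C)).
      set (t := (- s0 / p)%C).
      exists (fun k => if Nat.eq_dec k n' then t else g k).
      split. exists k0. split. lia. destruct (Nat.eq_dec k0 n'). lia. auto.
      intros j Hj. simpl.
      rewrite (csum_ext n' _ (fun k => (a j k * g k)%C)) by (intros k Hk; destruct (Nat.eq_dec k n'); [lia|auto]).
      destruct (Nat.eq_dec n' n') as [_|]; [|congruence].
      destruct (Nat.eq_dec j i0) as [->|Hne].
      * fold s0. unfold t. fold p. field. auto.
      * set (i := if Nat.eq_dec j m then i0 else j).
        assert (Hi : (i < m)%nat) by (unfold i; destruct (Nat.eq_dec j m); lia).
        assert (Hri : r i = j) by (unfold r, i; destruct (Nat.eq_dec j m); destruct (Nat.eq_dec _ i0); subst; try congruence; lia).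
        specialize (Heq i Hi). unfold bb in Heq. rewrite Hri in Heq.
        assert (E : csum n' (fun k => ((p * a j k - a j n' * a i0 k) * g k)%C)
                = (p * csum n' (fun k => (a j k * g k)%C) - a j n' * s0)%C).
        { unfold s0. rewrite (csum_ext n' _ (fun k => (p * (a j k * g k) + (- a j n') * (a i0 k * g k))%C)) by (intros; ring).
          rewrite csum_plus, !csum_scal. ring. }
        rewrite E in Heq. unfold t.
        assert (Hs : csum n' (fun k => (a j k * g k)%C) = (a j n' * s0 / p)%C).
        { apply (f_equal (fun z => (z + a j n' * s0) / p)%C) in Heq. 
          replace ((p * csum n' (fun k => (a j k * g k)%C) - a j n' * s0 + a j n' * s0) / p)%C
             with (csum n' (fun k => (a j k * g k)%C)) in Heq by (field; auto).
          rewrite Heq. field. auto. }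
        rewrite Hs. field. auto.
    + exists (fun k => if Nat.eq_dec k n' then RtoC 1 else RtoC 0). split.
      exists n'. split. lia. destruct (Nat.eq_dec n' n'); [|congruence]. intro H; injection H; lra.
      intros i Hi. simpl. rewrite (csum_zero n' (fun k => (a i k * (if Nat.eq_dec k n' then RtoC 1 else RtoC 0))%C)). destruct (Nat.eq_dec n' n'); [|congruence].
      destruct (Classical_Prop.classic (a i n' = 0%C)) as [->|Hne]. ring.
      exfalso; apply Hno; eauto.
      intros k Hk; destruct (Nat.eq_dec k n'); [lia|ring].
Qed.
Lemma sR_mult_l (c : R) (u : nat -> R) a b : sum_n_m (fun k => c * u k) a b = c * sum_n_m u a b.
Proof. exact (sum_n_m_mult_l (K:=R_Ring) c u a b). Qed.
Lemma sR_plus (u v : nat -> R) a b : sum_n_m (fun k => u k + v k) a b = sum_n_m u a b + sum_n_m v a b.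
Proof. exact (sum_n_m_plus (G:=R_AbelianMonoid) u v a b). Qed.
Lemma sR_mult_r (c : R) (u : nat -> R) a b : sum_n_m (fun k => u k * c) a b = sum_n_m u a b * c.
Proof. exact (sum_n_m_mult_r (K:=R_Ring) c u a b). Qed.

Lemma dsum4 (g1 g2 g3 g4 h1 h2 h3 h4 : nat -> R) a b :
  sum_n_m (fun k => sum_n_m (fun n => g1 k * h1 n + g2 k * h2 n + g3 k * h3 n + g4 k * h4 n) a b) a b
  = sum_n_m g1 a b * sum_n_m h1 a b + sum_n_m g2 a b * sum_n_m h2 a b
   + sum_n_m g3 a b * sum_n_m h3 a b + sum_n_m g4 a b * sum_n_m h4 a b.
Proof.
  rewrite (sum_n_m_ext _ (fun k => g1 k * sum_n_m h1 a b + g2 k * sum_n_m h2 a b + g3 k * sum_n_m h3 a b + g4 k * sum_n_m h4 a b)).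
  - rewrite !sR_plus, !sR_mult_r. reflexivity.
  - intro k. rewrite !sR_plus, !sR_mult_l. toR. ring.
Qed.

Lemma lag_pt (ak an xk xn : C) :
  Cmod (ak * xn - an * xk)%C ^ 2 =
  Cmod ak ^ 2 * Cmod xn ^ 2 + Cmod an ^ 2 * Cmod xk ^ 2
  - 2 * (Re (ak * Cconj xk) * Re (an * Cconj xn) + Im (ak * Cconj xk) * Im (an * Cconj xn)).
Proof.
  rewrite !Cmod2_alt. destruct ak as [p1 q1], an as [p2 q2], xk as [u1 w1], xn as [u2 w2].
  unfold Cminus, Cmult, Cplus, Copp, Cconj, Re, Im; simpl. ring.
Qed.

Lemma sdiff (f : nat -> C) k n : (k <= n)%nat -> sum_n_m f (S k) n = (sum_n f n - sum_n f k)%C.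
Proof. intros H. exact (sum_n_m_sum_n (G:=C_AbelianGroup) f k n H). Qed.

Lemma term_eq (alpha f : nat -> C) k n :
  (if Nat.eqb n k then 0
   else (Cmod (Cmult (Cmult (alpha k) (alpha n))
                 (sum_n_m f (S (Nat.min k n)) (Nat.max k n)))) ^ 2)
  = Cmod (alpha k * Ralpha alpha f n - alpha n * Ralpha alpha f k)%C ^ 2.
Proof.
  unfold Ralpha.
  destruct (Nat.eqb_spec n k) as [->|Hne].
  - replace (alpha k * (alpha k * sum_n f k) - alpha k * (alpha k * sum_n f k))%C with (RtoC 0) by ring.
    rewrite Cmod_0. ring.
  - destruct (Nat.lt_ge_cases k n) as [H|H].
    + rewrite Nat.min_l, Nat.max_r by lia. rewrite (sdiff f k n) by lia.
      f_equal. f_equal. ring.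
    + rewrite Nat.min_r, Nat.max_l by lia. rewrite (sdiff f n k) by lia.
      rewrite <- Cmod_opp. f_equal. f_equal. ring.
Qed.

Lemma lagrange (alpha f : nat -> C) a b :
  lI alpha a b f <= 2 * muI alpha a b * sum_n_m (fun k => Cmod (Ralpha alpha f k) ^ 2) a b.
Proof.
  unfold lI, muI.
  set (x := Ralpha alpha f).
  set (A := fun k => Cmod (alpha k) ^ 2). set (X := fun k => Cmod (x k) ^ 2).
  set (r := fun k => Re (alpha k * Cconj (x k))). set (s := fun k => Im (alpha k * Cconj (x k))).
  rewrite (sum_n_m_ext _ (fun k => sum_n_m (fun n => A k * X n + X k * A n + (-2 * r k) * r n + (-2 * s k) * s n) a b)).
  - rewrite dsum4.
    rewrite (sR_mult_l (-2) r), (sR_mult_l (-2) s).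
    change (sum_n_m (fun k => Cmod (alpha k) ^ 2) a b) with (sum_n_m A a b).
    change (sum_n_m (fun k => Cmod (x k) ^ 2) a b) with (sum_n_m X a b).
    nra.
  - intro k. apply sum_n_m_ext. intro n. rewrite term_eq. fold x. rewrite lag_pt.
    unfold A, X, r, s. toR. ring.
Qed.
Lemma lub_ge (E : Rbar -> Prop) x : E x -> Rbar_le x (Rbar_lub E).
Proof. unfold Rbar_lub. destruct (Rbar_ex_lub E) as [l [H1 H2]]. simpl. auto. Qed.
Lemma lub_le (E : Rbar -> Prop) m : (forall x, E x -> Rbar_le x m) -> Rbar_le (Rbar_lub E) m.
Proof. unfold Rbar_lub. destruct (Rbar_ex_lub E) as [l [H1 H2]]. simpl. auto. Qed.
Lemma glb_ge (E : Rbar -> Prop) m : (forall x, E x -> Rbar_le m x) -> Rbar_le m (Rbar_glb E).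
Proof. unfold Rbar_glb. destruct (Rbar_ex_glb E) as [l [H1 H2]]. simpl. auto. Qed.

Lemma sR_nonneg (u : nat -> R) a b : (forall k, 0 <= u k) -> 0 <= sum_n_m u a b.
Proof. intros H. apply Rle_trans with (sum_n_m (fun _ => 0) a b).
  rewrite sum_n_m_const. lra. apply sum_n_m_le. auto. Qed.

Lemma sR_mono (u : nat -> R) n M : (forall k, 0 <= u k) -> (n <= M)%nat -> sum_n_m u 0 n <= sum_n_m u 0 M.
Proof. intros H Hn. destruct (Nat.eq_dec n M) as [->|]. lra.
  rewrite (sum_n_m_Chasles u 0 n M) by lia.
  assert (0 <= sum_n_m u (S n) M) by (apply sR_nonneg; auto). change (plus ?x ?y) with (x + y). lra. Qed.

Lemma lI_loc (alpha f g : nat -> C) (b0 : C) a b :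
  (forall j, (a <= j <= b)%nat -> f j = (b0 * g j)%C) ->
  lI alpha a b f = Cmod b0 ^ 2 * lI alpha a b g.
Proof.
  intros H. unfold lI. rewrite <- sR_mult_l. apply sum_n_m_ext_loc. intros k Hk.
  rewrite <- sR_mult_l. apply sum_n_m_ext_loc. intros n Hn.
  destruct (Nat.eqb n k). toR; ring.
  rewrite (sum_n_m_ext_loc f (fun j => (b0 * g j)%C)).
  2: { intros j Hj. apply H. lia. }
  assert (E : forall lo hi, sum_n_m (fun j => (b0 * g j)%C) lo hi = (b0 * sum_n_m g lo hi)%C)
    by (intros; exact (sum_n_m_mult_l (K:=C_Ring) b0 g lo hi)).
  rewrite E, !Cmod_mult. toR; ring.
Qed.

Lemma muI_nonneg alpha a b : 0 <= muI alpha a b.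
Proof. apply sR_nonneg. intros; apply pow2_ge_0. Qed.

Lemma LI_extract alpha a b eps : 0 < eps -> Rbar_lt eps (LI alpha a b) ->
  0 < muI alpha a b /\ exists f : nat -> C, (forall k, (k < a \/ b < k)%nat -> f k = 0%C) /\
     normI f a b <= 1 /\ eps ^ 2 * muI alpha a b < lI alpha a b f.
Proof.
  intros He. unfold LI. destruct (Req_EM_T (muI alpha a b) 0) as [H0|H0].
  simpl. lra.
  assert (Hmu : 0 < muI alpha a b) by (pose proof (muI_nonneg alpha a b); lra).
  intros Hlt. split. auto.
  set (E := fun x => exists f : nat -> C, (forall k, (k < a \/ b < k)%nat -> f k = 0%C) /\
          normI f a b <= 1 /\ x = lI alpha a b f / muI alpha a b).
  fold E in Hlt.
  destruct (classic (exists x, E x /\ eps ^ 2 < x)) as [[x [[f [H1 [H2 H3]]] Hx]]|Hno].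
  - exists f. split; auto. split; auto. subst x.
    apply (Rmult_lt_compat_r (muI alpha a b)) in Hx; auto.
    unfold Rdiv in Hx. rewrite Rmult_assoc, Rinv_l in Hx by lra. lra.
  - assert (Hub : Rbar_le (Lub_Rbar E) (eps ^ 2)).
    { destruct (Lub_Rbar_correct E) as [_ Hl]. apply Hl. intros x Ex. simpl.
      destruct (Rle_or_lt x (eps^2)); auto. exfalso; apply Hno; eauto. }
    destruct (Lub_Rbar E) as [r| |]; simpl in *; try tauto.
    + assert (sqrt r <= sqrt (eps ^ 2)) by (apply sqrt_le_1_alt; auto).
      rewrite sqrt_pow2 in H by lra. lra.
    + lra.
Qed.

Lemma zero_l2 : l2 (fun _ => 0%C).
Proof. unfold l2. apply (ex_series_ext (fun n => scal 0 (0 ^ n))).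
  intro n. rewrite Cmod_0. unfold scal; simpl. unfold mult; simpl. ring.
  apply (ex_series_scal_l (K:=R_AbsRing) (V:=R_NormedModule) 0 (fun n => 0 ^ n)). apply ex_series_geom. rewrite Rabs_R0; lra. Qed.

Lemma fs_l2 (g : nat -> C) M : (forall j, (M < j)%nat -> g j = 0%C) -> l2 g.
Proof. intros H. unfold l2. apply (ex_series_incr_n _ (S M)).
  apply (ex_series_ext (fun n => Cmod ((fun _ => 0%C) n) ^ 2)). intro n. rewrite H by lia. auto.
  apply zero_l2. Qed.

Lemma l2norm_le1 (g : nat -> C) M : (forall j, (M < j)%nat -> g j = 0%C) ->
  sum_n (fun k => Cmod (g k) ^ 2) M <= 1 -> Rbar_le (l2norm g) 1.
Proof.
  intros H Hs. unfold l2norm.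
  assert (HS : Rbar_le (Sup_seq (fun n => Finite (sum_n (fun k => Cmod (g k) ^ 2) n))) 1).
  { rewrite Rbar_sup_eq_lub. apply lub_le. intros x [n ->]. unfold Rbar_le.
    unfold sum_n in *. destruct (Nat.le_gt_cases n M).
    - eapply Rle_trans; [apply sR_mono|]; eauto. intros; apply pow2_ge_0.
    - rewrite (sum_n_m_Chasles _ 0 M n) by lia.
      rewrite (sum_n_m_ext_loc _ (fun _ => 0) (S M) n). rewrite sum_n_m_const.
      change (plus ?x ?y) with (x + y). lra.
      intros k Hk. rewrite H by lia. rewrite Cmod_0. toR; ring. }
  assert (H0 : Rbar_le 0 (Sup_seq (fun n => Finite (sum_n (fun k => Cmod (g k) ^ 2) n)))).
  { apply (Sup_seq_minor_le _ 0 0). simpl. unfold sum_n. apply sR_nonneg. intros; apply pow2_ge_0. }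
  destruct (Sup_seq _) as [r| |]; simpl in *; try tauto.
  rewrite <- sqrt_1. apply sqrt_le_1_alt. auto.
Qed.

Lemma l2norm_ge (g : nat -> C) M : Rbar_le (Finite (sqrt (sum_n (fun k => Cmod (g k) ^ 2) M))) (l2norm g).
Proof.
  unfold l2norm.
  assert (H0 : Rbar_le (sum_n (fun k => Cmod (g k) ^ 2) M) (Sup_seq (fun n => Finite (sum_n (fun k => Cmod (g k) ^ 2) n)))).
  { apply (Sup_seq_minor_le _ _ M). simpl. lra. }
  destruct (Sup_seq _) as [r| |]; simpl in *; try tauto.
  apply sqrt_le_1_alt. auto.
Qed.

Fixpoint rsum (n : nat) (F : nat -> R) : R :=
  match n with O => 0 | S m => rsum m F + F m end.

Lemma rsum_le n (F G : nat -> R) : (forall k, (k < n)%nat -> F k <= G k) -> rsum n F <= rsum n G.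
Proof. induction n; simpl; intros H. lra. pose proof (H n ltac:(lia)). pose proof (IHn ltac:(intros; apply H; lia)). lra. Qed.
Lemma rsum_ext n (F G : nat -> R) : (forall k, (k < n)%nat -> F k = G k) -> rsum n F = rsum n G.
Proof. induction n; simpl; intros H. lra. rewrite (H n) by lia. rewrite IHn by (intros; apply H; lia). lra. Qed.
Lemma rsum_scal n (c : R) (F : nat -> R) : rsum n (fun k => c * F k) = c * rsum n F.
Proof. induction n; simpl. ring. rewrite IHn. ring. Qed.
Lemma rsum_ge n (F : nat -> R) k0 : (forall k, 0 <= F k) -> (k0 < n)%nat -> F k0 <= rsum n F.
Proof. induction n; simpl; intros H Hk. lia.
  assert (0 <= rsum n F) by (clear -H; induction n; simpl; [lra|pose proof (H n); lra]).
  destruct (Nat.eq_dec k0 n) as [->|]. pose proof (H n); lra.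
  pose proof (IHn H ltac:(lia)). pose proof (H n). lra. Qed.

Lemma sum_split (u : nat -> R) (cc : nat -> nat) N : cc 0%nat = 0%nat ->
  (forall k, (k < N)%nat -> (cc k < cc (S k))%nat) -> (1 <= N)%nat ->
  sum_n_m u 0 (cc N - 1) = rsum N (fun k => sum_n_m u (cc k) (cc (S k) - 1)).
Proof.
  intros H0 Hs. induction N as [|n IH]; intros HN. lia.
  destruct (Nat.eq_dec n 0) as [->|Hn]. simpl. rewrite H0. symmetry; apply Rplus_0_l.
  assert (Hge : forall k, (k <= n)%nat -> (k <= cc k)%nat).
  { induction k; intros. lia. pose proof (Hs k ltac:(lia)). pose proof (IHk ltac:(lia)). lia. }
  pose proof (Hge n ltac:(lia)). pose proof (Hs n ltac:(lia)).
  simpl. rewrite <- IH by (intros; try apply Hs; lia).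
  rewrite (sum_n_m_Chasles u 0 (cc n - 1) (cc (S n) - 1)) by lia.
  replace (S (cc n - 1)) with (cc n) by lia. reflexivity.
Qed.

Lemma P_zero P : lin_l2 P -> P (fun _ => 0%C) = (fun _ => 0%C).
Proof. intros [H1 H2].
  apply functional_extensionality; intro k.
  transitivity (P (fun k => Cplus ((fun _ : nat => 0%C) k) (Cmult (RtoC (-1)) ((fun _ : nat => 0%C) k))) k).
  { f_equal. apply functional_extensionality; intros; ring. }
  rewrite (H2 (fun _ => 0%C) (fun _ => 0%C) (RtoC (-1)) zero_l2 zero_l2). cbv beta. ring.
Qed.

Lemma P_comb P n (b : nat -> C) (G : nat -> nat -> C) M : lin_l2 P ->
  (forall k j, (M < j)%nat -> G k j = 0%C) ->
  P (fun j => csum n (fun k => (b k * G k j)%C)) = (fun j => csum n (fun k => (b k * P (G k) j)%C)).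
Proof.
  intros HP HG. induction n.
  - simpl. apply P_zero; auto.
  - simpl. pose proof (proj2 HP (fun j => csum n (fun k => (b k * G k j)%C)) (G n) (b n)) as E.
    cbv beta in E. rewrite E. rewrite IHn. reflexivity.
    apply (fs_l2 _ M). intros j Hj. apply csum_zero. intros k _. rewrite HG by auto. ring.
    apply (fs_l2 _ M). auto.
Qed.

Theorem lemma4p3 (alpha : nat -> C) (eps : R) (N : nat) (c : nat -> option nat) :
  l2 alpha -> 0 < eps -> (1 <= N)%nat ->
  eps_L_seq alpha eps c -> c N <> None ->
  Rbar_le (Finite (eps / sqrt 2)) (approx_num (Ralpha alpha) N).
Proof.
  intros Hal He HN [Hc0 Hcs] HcN.
  assert (Hnn : forall k, (k <= N)%nat -> c k <> None).
  { intros k Hk Hck. apply HcN.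
    assert (Hd : forall d, c (k + d)%nat = None).
    { induction d. rewrite Nat.add_0_r; auto. rewrite Nat.add_succ_r.
      specialize (Hcs (k + d)%nat). rewrite IHd in Hcs. auto. }
    replace N with (k + (N - k))%nat by lia. auto. }
  set (cc := fun k => match c k with Some t => t | None => 0%nat end).
  assert (Hcc0 : cc 0%nat = 0%nat) by (unfold cc; rewrite Hc0; auto).
  assert (Hstep : forall k, (k < N)%nat -> (cc k < cc (S k))%nat /\ Rbar_lt eps (LI alpha (cc k) (cc (S k) - 1))).
  { intros k Hk. specialize (Hcs k). unfold cc.
    destruct (c k) as [ck|] eqn:E. 2: (exfalso; apply (Hnn k); [lia|auto]).
    destruct (c (S k)) as [t|] eqn:E2. 2: (exfalso; apply (Hnn (S k)); [lia|auto]).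
    simpl in Hcs. destruct Hcs as [[H1 H2] _]. auto. }
  assert (Hmono : forall k m, (k <= m <= N)%nat -> (cc k <= cc m)%nat).
  { intros k m. induction m; intros H. replace k with 0%nat by lia; lia.
    destruct (Nat.eq_dec k (S m)). subst; lia.
    pose proof (proj1 (Hstep m ltac:(lia))). specialize (IHm ltac:(lia)). lia. }
  assert (Hex : forall k, exists g : nat -> C, l2 g /\ (forall j, (cc N - 1 < j)%nat -> g j = 0%C) /\
     ((k < N)%nat -> (forall j, (j < cc k \/ cc (S k) - 1 < j)%nat -> g j = 0%C) /\
        normI g (cc k) (cc (S k) - 1) <= 1 /\
        eps ^ 2 * muI alpha (cc k) (cc (S k) - 1) < lI alpha (cc k) (cc (S k) - 1) g)).
  { intros k. destruct (Nat.lt_ge_cases k N) as [Hk|Hk].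
    - destruct (Hstep k Hk) as [Hlt HL].
      destruct (LI_extract _ _ _ _ He HL) as [_ [g [Hs [Hn Hl]]]].
      assert (Hz : forall j, (cc N - 1 < j)%nat -> g j = 0%C)
        by (intros; apply Hs; right; pose proof (Hmono (S k) N ltac:(lia)); lia).
      exists g. split. apply (fs_l2 _ _ Hz). split; auto.
    - exists (fun _ => 0%C). split. apply zero_l2. split. auto. intros; lia. }
  destruct (functional_choice _ Hex) as [F HF].
  assert (HFz : forall k j, (cc N - 1 < j)%nat -> F k j = 0%C) by (intros k; apply (HF k)).
  unfold approx_num. apply glb_ge. intros x [P [HP [Hrank ->]]].
  destruct Hrank as [v [Hv HPv]].
  assert (Hd : forall k, exists d : nat -> C, P (F k) = (fun j => csum (N - 1) (fun i => (d i * v i j)%C))).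
  { intros k; apply HPv; apply HF. }
  destruct (functional_choice _ Hd) as [D HD].
  destruct (homog_solve (N - 1) N ltac:(lia) (fun i k => D k i)) as [b [[k0 [Hk0 Hb0]] Hbeq]].
  set (B := rsum N (fun k => Cmod (b k) ^ 2)).
  assert (HB : 0 < B).
  { apply Rlt_le_trans with (Cmod (b k0) ^ 2). apply pow_lt. apply Cmod_gt_0; auto.
    apply (rsum_ge N (fun k => Cmod (b k) ^ 2) k0); auto. intros; apply pow2_ge_0. }
  set (s := / sqrt B).
  assert (Hs : 0 < s) by (apply Rinv_0_lt_compat, sqrt_lt_R0; auto).
  set (b' := fun k => (RtoC s * b k)%C).
  assert (Hb'2 : forall k, Cmod (b' k) ^ 2 = / B * Cmod (b k) ^ 2).
  { intros k. unfold b'. rewrite Cmod_mult, Cmod_R, Rabs_pos_eq by lra.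
    unfold s. rewrite Rpow_mult_distr, pow_inv, pow2_sqrt by lra. reflexivity. }
  assert (Hb'sum : rsum N (fun k => Cmod (b' k) ^ 2) = 1).
  { rewrite (rsum_ext _ _ (fun k => / B * Cmod (b k) ^ 2)) by auto.
    rewrite rsum_scal. fold B. field. lra. }
  set (f := fun j => csum N (fun k => (b' k * F k j)%C)).
  assert (Hfz : forall j, (cc N - 1 < j)%nat -> f j = 0%C).
  { intros j Hj. apply csum_zero. intros k _. rewrite HFz by auto. ring. }
  assert (HPf : P f = (fun _ => 0%C)).
  { unfold f. rewrite (P_comb P N b' F (cc N - 1) HP HFz).
    apply functional_extensionality; intro j.
    rewrite (csum_ext N _ (fun k => csum (N - 1) (fun i => (b' k * D k i * v i j)%C))).
    2: { intros k _. rewrite HD. rewrite <- csum_scal. apply csum_ext. intros; ring. }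
    rewrite csum_swap. apply csum_zero. intros i Hi.
    rewrite (csum_ext N _ (fun k => ((RtoC s * v i j) * (D k i * b k))%C)) by (intros; unfold b'; ring).
    rewrite csum_scal. pose proof (Hbeq i Hi) as Hq. cbv beta in Hq. rewrite Hq. ring. }
  assert (Hloc : forall k, (k < N)%nat -> forall j, (cc k <= j <= cc (S k) - 1)%nat -> f j = (b' k * F k j)%C).
  { intros k Hk j Hj. unfold f. apply (csum_single N (fun m => (b' m * F m j)%C) k Hk).
    intros m Hm Hmk. destruct (proj2 (proj2 (HF m)) Hm) as [Hsup _].
    rewrite Hsup. ring.
    destruct (Nat.lt_ge_cases m k).
    - right. pose proof (Hmono (S m) k ltac:(lia)). pose proof (proj1 (Hstep m Hm)). lia.
    - left. pose proof (Hmono (S k) m ltac:(lia)). pose proof (proj1 (Hstep k Hk)). lia. }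
  assert (Hfn : Rbar_le (l2norm f) 1).
  { apply (l2norm_le1 f (cc N - 1) Hfz). unfold sum_n.
    rewrite (sum_split _ cc N Hcc0 (fun k Hk => proj1 (Hstep k Hk)) HN).
    rewrite <- Hb'sum. apply rsum_le. intros k Hk.
    rewrite (sum_n_m_ext_loc _ (fun j => Cmod (b' k) ^ 2 * (Cmod (F k j) ^ 2))).
    2: { intros j Hj. rewrite (Hloc k Hk j Hj). rewrite Cmod_mult. toR; ring. }
    rewrite sR_mult_l.
    destruct (proj2 (proj2 (HF k)) Hk) as [_ [Hn _]]. unfold normI in Hn.
    set (S0 := sum_n_m (fun k0 => Cmod (F k k0) ^ 2) (cc k) (cc (S k) - 1)) in *.
    assert (0 <= S0) by (apply sR_nonneg; intros; apply pow2_ge_0).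
    assert (S0 <= 1).
    { pose proof (sqrt_sqrt S0 H). pose proof (sqrt_pos S0). nra. }
    pose proof (pow2_ge_0 (Cmod (b' k))). nra. }
  assert (Hrf : eps ^ 2 / 2 <= sum_n (fun k => Cmod (Cminus (Ralpha alpha f k) (P f k)) ^ 2) (cc N - 1)).
  { rewrite HPf. unfold sum_n.
    rewrite (sum_n_m_ext _ (fun k => Cmod (Ralpha alpha f k) ^ 2)).
    2: { intro k. f_equal. f_equal. unfold Cminus. ring. }
    rewrite (sum_split _ cc N Hcc0 (fun k Hk => proj1 (Hstep k Hk)) HN).
    replace (eps ^ 2 / 2) with (rsum N (fun k => eps ^ 2 / 2 * Cmod (b' k) ^ 2))
      by (rewrite rsum_scal, Hb'sum; ring).
    apply rsum_le. intros k Hk.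
    pose proof (lagrange alpha f (cc k) (cc (S k) - 1)) as Hlag.
    rewrite (lI_loc alpha f (F k) (b' k)) in Hlag by (intros; apply Hloc; auto).
    destruct (proj2 (proj2 (HF k)) Hk) as [_ [_ Hl]].
    destruct (LI_extract _ _ _ _ He (proj2 (Hstep k Hk))) as [Hmu _].
    set (mu := muI alpha (cc k) (cc (S k) - 1)) in *.
    set (S0 := sum_n_m (fun k0 => Cmod (Ralpha alpha f k0) ^ 2) (cc k) (cc (S k) - 1)) in *.
    set (bb := Cmod (b' k) ^ 2) in *.
    assert (0 <= bb) by apply pow2_ge_0.
    assert (bb * (eps ^ 2 * mu) <= 2 * mu * S0).
    { eapply Rle_trans; [|apply Hlag]. apply Rmult_le_compat_l; lra. }
    apply (Rmult_le_reg_l (2 * mu)). lra. nra. }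
  apply Rbar_le_trans with (l2norm (fun k => Cminus (Ralpha alpha f k) (P f k))).
  - eapply Rbar_le_trans; [|apply l2norm_ge]. simpl.
    replace (eps / sqrt 2) with (sqrt (eps ^ 2 / 2)).
    apply sqrt_le_1_alt. exact Hrf.
    rewrite sqrt_div, sqrt_pow2; try lra. apply pow2_ge_0.
  - unfold opnorm. apply lub_ge. exists f. split. apply (fs_l2 _ _ Hfz). split; auto.
Qed.
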